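(* Let $X$ be a real Banach space. Then $X$ is fully Mazur if and only if $S_1(Y)=X^*$ for every norming and norm-closed linear subspace $Y\subset X^*$.
   Context: For $A\subset X^*$, $S_1(A)$ denotes the set of all limits of $w^*$-convergent sequences contained in $A$. A linear subspace $Y\subset X^*$ is norming if $|||x|||=\sup\{x^*(x): x^*\in Y,\ \|x^*\|\le 1\}$ defines an equivalent norm on $X$. $X$ is fully Mazur if for every norming and norm-closed subspace $Y\subset X^*$, every $w^*$-sequentially continuous linear functional $f:Y\to\mathbb{R}$ is $w^*$-continuous. *)

(* Defs.v *)
(* X : completeNormedModType R, R : realType.
   The dual X^* is represented as the set [dual X] of continuous linear
   functionals X -> R (as plain functions). *)
From HB Require Import structures.
From mathcomp Require Import all_boot all_order all_algebra.
From mathcomp Require Import all_classical all_reals all_analysis.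
Set Implicit Arguments. Unset Strict Implicit. Unset Printing Implicit Defensive.
Import Order.TTheory GRing.Theory Num.Theory.
Import numFieldNormedType.Exports.
Local Open Scope classical_set_scope.
Local Open Scope ring_scope.

Section Dual.
Variables (R : realType) (X : normedModType R).

Definition is_linear_fun (f : X -> R) : Prop :=
  (forall x y, f (x + y) = f x + f y) /\ (forall (a : R) x, f (a *: x) = a * f x).

Definition dual : set (X -> R) := [set f | is_linear_fun f /\ continuous f].

Definition dual_norm (f : X -> R) : R := sup [set `|f x| | x in [set x : X | `|x| <= 1]].

Definition dual_subspace (Y : set (X -> R)) : Prop :=
  Y `<=` dual /\ Y (fun _ => 0) /\
  (forall f g, Y f -> Y g -> Y (fun x => f x + g x)) /\
  (forall (a : R) f, Y f -> Y (fun x => a * f x)).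

Definition norming_norm (Y : set (X -> R)) (x : X) : R :=
  sup [set f x | f in [set f | Y f /\ dual_norm f <= 1]].

Definition norming (Y : set (X -> R)) : Prop :=
  exists c C : R, 0 < c /\ 0 < C /\
    forall x : X, c * `|x| <= norming_norm Y x /\ norming_norm Y x <= C * `|x|.

Definition norm_closed (Y : set (X -> R)) : Prop :=
  forall f, dual f ->
    (forall e : R, 0 < e -> exists g, Y g /\ dual_norm (fun x => f x - g x) < e) ->
    Y f.

Definition wstar_cvg (u : nat -> X -> R) (f : X -> R) : Prop :=
  forall x : X, (fun n => u n x) @ \oo --> f x.

Definition S1 (A : set (X -> R)) : set (X -> R) :=
  [set f | dual f /\ exists u : nat -> X -> R, (forall n, A (u n)) /\ wstar_cvg u f].

(* linear functional F : Y -> R (values outside Y are irrelevant) *)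
Definition linear_on (Y : set (X -> R)) (F : (X -> R) -> R) : Prop :=
  (forall f g, Y f -> Y g -> F (fun x => f x + g x) = F f + F g) /\
  (forall (a : R) f, Y f -> F (fun x => a * f x) = a * F f).

Definition wstar_seq_continuous (Y : set (X -> R)) (F : (X -> R) -> R) : Prop :=
  forall (u : nat -> X -> R) f, (forall n, Y (u n)) -> Y f -> wstar_cvg u f ->
    F (u n) @[n --> \oo] --> F f.

(* continuity on Y for the (relative) w* topology, whose basic neighbourhoods
   of g are { h : |h x - g x| < d for all x in a finite set s } *)
Definition wstar_continuous (Y : set (X -> R)) (F : (X -> R) -> R) : Prop :=
  forall g, Y g -> forall e : R, 0 < e ->
    exists (s : seq X) (d : R), 0 < d /\
      forall h, Y h -> (forall x, x \in s -> `|h x - g x| < d) -> `|F h - F g| < e.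

Definition fully_Mazur : Prop :=
  forall Y : set (X -> R), dual_subspace Y -> norming Y -> norm_closed Y ->
    forall F : (X -> R) -> R, linear_on Y F -> wstar_seq_continuous Y F ->
      wstar_continuous Y F.

End Dual.

(* Main.v *)
Require Import Defs.
From HB Require Import structures.
From mathcomp Require Import all_boot all_order all_algebra.
From mathcomp Require Import all_classical all_reals all_analysis.
Import Order.TTheory GRing.Theory Num.Theory.
Import numFieldNormedType.Exports.
From mathcomp Require Import ring lra.
Set Implicit Arguments. Unset Strict Implicit. Unset Printing Implicit Defensive.
Local Open Scope classical_set_scope.
Local Open Scope ring_scope.

Lemma near_oo_ex (P : nat -> Prop) :
  (\forall n \near \oo, P n) <-> exists N, forall n, (N <= n)%N -> P n.
Proof.
split; first by move=> [N _ H]; exists N.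
by move=> [N H]; exists N.
Qed.

Lemma seq_cvgP (R : realType) (u : nat -> R) (l : R) :
  u n @[n --> \oo] --> l <->
  forall e, 0 < e -> exists N, forall n, (N <= n)%N -> `|l - u n| < e.
Proof.
rewrite cvgrPdist_lt; split=> H e /H; by rewrite near_oo_ex.
Qed.

Section Basics.
Variables (R : realType) (X : normedModType R).

Lemma lin0 (f : X -> R) : is_linear_fun f -> f 0 = 0.
Proof. move=> [_ Hs]; by rewrite -(scale0r (0:X)) Hs mul0r. Qed.

Lemma linN (f : X -> R) x : is_linear_fun f -> f (- x) = - f x.
Proof. move=> [_ Hs]; by rewrite -scaleN1r Hs mulN1r. Qed.

Lemma linB (f : X -> R) x y : is_linear_fun f -> f (x - y) = f x - f y.
Proof. move=> H; rewrite H.1 linN //. Qed.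

Lemma dual_bounded (f : X -> R) : dual f -> exists M, 0 < M /\ forall x, `|f x| <= M * `|x|.
Proof.
move=> [Hl Hc].
have := Hc 0; move/cvgrPdist_lt => /(_ 1 ltr01).
rewrite -nbhs_nearE => /nbhs_norm0P [d /= d0 Hd].
exists (2 / d); split; first by rewrite divr_gt0.
move=> x; have [->|x0] := eqVneq x 0.
  by rewrite (lin0 Hl) normr0 normr0 mulr0.
have nx : 0 < `|x| by rewrite normr_gt0.
set a := d / (2 * `|x|).
have a0 : 0 < a by rewrite divr_gt0 // mulr_gt0.
have ax : a * `|x| = d / 2 by rewrite /a; field; rewrite gt_eqF.
have : `|a *: x| < d by rewrite normrZ gtr0_norm // ax; lra.
move=> /Hd /=; rewrite (lin0 Hl) sub0r normrN Hl.2 normrM gtr0_norm // => H1.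
have : `|f x| < 1 / a by rewrite ltr_pdivlMr // mulrC.
move=> /ltW H2; apply: (le_trans H2); rewrite le_eqVlt; apply/orP; left; apply/eqP.
rewrite /a; field; rewrite ?gt_eqF //.
Qed.

Definition dnset (f : X -> R) := [set `|f x| | x in [set x : X | `|x| <= 1]].

Lemma dnset0 (f : X -> R) : dnset f !=set0.
Proof. exists `|f 0|; exists 0 => //=; by rewrite normr0. Qed.

Lemma dn_has_sup (f : X -> R) : dual f -> has_sup (dnset f).
Proof.
move=> /dual_bounded [M [M0 HM]]; split; first exact: dnset0.
exists M => _ [x /= x1 <-]; apply: (le_trans (HM x)).
have := normr_ge0 x; nra.
Qed.

Lemma dn_ge (f : X -> R) x : dual f -> `|x| <= 1 -> `|f x| <= dual_norm f.
Proof. move=> /dn_has_sup H x1; apply: sup_upper_bound => //; by exists x. Qed.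

Lemma dn_ge0 (f : X -> R) : dual f -> 0 <= dual_norm f.
Proof.
move=> H; have h1 : `|(0:X)| <= 1 by rewrite normr0.
exact: le_trans (normr_ge0 _) (dn_ge H h1).
Qed.

Lemma dn_bound (f : X -> R) x : dual f -> `|f x| <= dual_norm f * `|x|.
Proof.
move=> H; have [->|x0] := eqVneq x 0.
  by rewrite (lin0 H.1) !normr0 mulr0.
have nx : 0 < `|x| by rewrite normr_gt0.
have : `|(`|x|^-1 *: x)| <= 1 by rewrite normrZ normrV ?unitfE ?gt_eqF // normr_id mulVf ?gt_eqF.
move=> /(dn_ge H); rewrite H.1.2 normrM normrV ?unitfE ?gt_eqF // normr_id.
by rewrite mulrC ler_pdivrMr.
Qed.

Lemma dn_le (f : X -> R) K : (forall x, `|x| <= 1 -> `|f x| <= K) -> dual_norm f <= K.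
Proof. move=> H; apply: ge_sup; first exact: dnset0. by move=> _ [x /= /H x1 <-]. Qed.

Lemma dn_le_of (f : X -> R) K : 0 <= K -> (forall x, `|f x| <= K * `|x|) -> dual_norm f <= K.
Proof.
move=> K0 H; apply: dn_le => x x1; apply: (le_trans (H x)).
have := normr_ge0 x; nra.
Qed.

Lemma dual0 : dual (fun _ : X => 0).
Proof.
split; first by split=> *; rewrite ?addr0 ?mulr0.
move=> x; exact: cvg_cst.
Qed.

Lemma dualD (f g : X -> R) : dual f -> dual g -> dual (fun x => f x + g x).
Proof.
move=> [[f1 f2] fc] [[g1 g2] gc]; split.
  split=> *; rewrite ?f1 ?g1 ?f2 ?g2; lra.
move=> x; apply: cvgD; [exact: fc | exact: gc].
Qed.

Lemma dualZ (a : R) (f : X -> R) : dual f -> dual (fun x => a * f x).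
Proof.
move=> [[f1 f2] fc]; split.
  split=> *; rewrite ?f1 ?f2; lra.
move=> x; apply: cvgM; [exact: cvg_cst | exact: fc].
Qed.

Lemma dn0 : dual_norm (fun _ : X => 0) = 0.
Proof.
apply/eqP; rewrite eq_le dn_ge0 ?andbT; last exact: dual0.
by apply: dn_le => x _; rewrite normr0.
Qed.


Definition nnset (Y : set (X -> R)) (x : X) := [set f x | f in [set f | Y f /\ dual_norm f <= 1]].

Lemma nnset0 (Y : set (X -> R)) (x : X) : dual_subspace Y -> nnset Y x !=set0.
Proof. move=> [_ [Y0 _]]; exists 0; exists (fun _ => 0) => //. split => //; apply: dn_le => y _; by rewrite normr0 ler01. Qed.

Lemma nnset_ub (Y : set (X -> R)) (x : X) : dual_subspace Y -> ubound (nnset Y x) `|x|.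
Proof.
move=> [YD _] _ [f [Yf f1] <-].
have h1 := ler_norm (f x); have h2 := dn_bound x (YD _ Yf).
have := normr_ge0 x; nra.
Qed.

Lemma nn_le (Y : set (X -> R)) (x : X) : dual_subspace Y -> norming_norm Y x <= `|x|.
Proof. move=> H; apply: ge_sup; [exact: nnset0 | exact: nnset_ub]. Qed.

Lemma nn_ge (Y : set (X -> R)) (x : X) f : dual_subspace Y -> Y f -> dual_norm f <= 1 -> f x <= norming_norm Y x.
Proof.
move=> H Yf f1; apply: sup_upper_bound; last by exists f.
split; [exact: nnset0 | exists `|x|; exact: nnset_ub].
Qed.

Lemma nn_gt (Y : set (X -> R)) (x : X) a : dual_subspace Y -> a < norming_norm Y x ->
  exists f, [/\ Y f, dual_norm f <= 1 & a < f x].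
Proof.
move=> H /(sup_gt (nnset0 x H)) [_ [f [Yf f1] <-] af]; by exists f.
Qed.

Lemma nn_mono (Y Y' : set (X -> R)) (x : X) : dual_subspace Y -> dual_subspace Y' -> Y `<=` Y' ->
  norming_norm Y x <= norming_norm Y' x.
Proof.
move=> H H' sub; apply: ge_sup; first exact: nnset0.
move=> _ [f [Yf f1] <-]; apply: nn_ge => //; exact: sub.
Qed.

Lemma nn_of_bound (Y : set (X -> R)) (x : X) K : dual_subspace Y -> 0 <= K ->
  (forall f, Y f -> `|f x| <= K * dual_norm f) -> norming_norm Y x <= K.
Proof.
move=> [YD [Y0 YS]] K0 H; apply: ge_sup; first by apply: nnset0.
move=> _ [f [Yf f1] <-]; apply: le_trans (ler_norm _) _.
apply: le_trans (H _ Yf) _.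
have := dn_ge0 (YD _ Yf); nra.
Qed.


Lemma dnZ_le (a : R) (f : X -> R) : dual f -> dual_norm (fun y => a * f y) <= `|a| * dual_norm f.
Proof.
move=> H; apply: dn_le_of; first by rewrite mulr_ge0 ?dn_ge0.
move=> y; rewrite normrM -mulrA ler_wpM2l //; exact: dn_bound.
Qed.

Lemma dnD_le (f g : X -> R) : dual f -> dual g ->
  dual_norm (fun y => f y + g y) <= dual_norm f + dual_norm g.
Proof.
move=> Hf Hg; apply: dn_le_of; first by rewrite addr_ge0 ?dn_ge0.
move=> y; apply: le_trans (ler_normD _ _) _.
have := dn_bound y Hf; have := dn_bound y Hg; nra.
Qed.

Lemma norming_sep (Y : set (X -> R)) x : dual_subspace Y -> norming Y ->
  (forall f, Y f -> f x = 0) -> x = 0.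
Proof.
move=> H [c [C [c0 [C0 HN]]]] H0.
have : norming_norm Y x <= 0.
  apply: nn_of_bound => // f Yf; by rewrite H0 // normr0 mul0r.
have := (HN x).1 => h1 h2.
apply/normr0_eq0; have := normr_ge0 x; nra.
Qed.

Lemma not_norming_small (Y : set (X -> R)) : dual_subspace Y -> ~ norming Y ->
  forall c, 0 < c -> exists x, norming_norm Y x < c * `|x|.
Proof.
move=> H HN c c0; apply: contrapT => Hn; apply: HN.
exists c, 1; split => //; split => // x; split; last by rewrite mul1r nn_le.
by rewrite leNgt; apply/negP => h; apply: Hn; exists x.
Qed.

Lemma small_bound (Z : set (X -> R)) x eta z : dual_subspace Z ->
  norming_norm Z x <= eta -> Z z -> `|z x| <= eta * dual_norm z.
Proof.
move=> HZ Hn Zz; have [ZD [Z0 [ZA ZS]]] := HZ.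
have Dz := ZD _ Zz; have d0 := dn_ge0 Dz.
have [d00|dp] := eqVneq (dual_norm z) 0.
  by have := dn_bound x Dz; rewrite d00 mul0r mulr0.
have dpos : 0 < dual_norm z by rewrite lt_neqAle eq_sym dp d0.
have Hs : forall a, `|a| = (dual_norm z)^-1 -> a * z x <= eta.
  move=> a Ha; have Za : Z (fun y => a * z y) by exact: ZS.
  have hd : dual_norm (fun y => a * z y) <= 1.
    by apply: le_trans (dnZ_le a Dz) _; rewrite Ha mulVf.
  have := nn_ge x HZ Za hd => h; lra.
have ip : 0 < (dual_norm z)^-1 by rewrite invr_gt0.
have h1 := Hs _ (gtr0_norm ip).
have h2 : - (dual_norm z)^-1 * z x <= eta.
  by apply: Hs; rewrite normrN gtr0_norm // invr_gt0.
have e1 : (dual_norm z)^-1 * dual_norm z = 1 by rewrite mulVf.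
rewrite ler_norml; move: h1 h2 e1 d0; set t := (dual_norm z)^-1; set d := dual_norm z.
move=> h1 h2 e1 d0.
have k1 : t * z x * d <= eta * d by rewrite ler_wpM2r.
have k2 : - t * z x * d <= eta * d by rewrite ler_wpM2r.
have k3 : t * z x * d = z x by rewrite mulrAC e1 mul1r.
rewrite mulNr mulNr k3 in k2; rewrite k3 in k1.
apply/andP; split; lra.
Qed.


Lemma lin_sub (g y : X -> R) : is_linear_fun g -> is_linear_fun y ->
  is_linear_fun (fun x => g x - y x).
Proof.
move=> [g1 g2] [y1 y2]; split=> *; rewrite ?g1 ?g2 ?y1 ?y2; lra.
Qed.

Lemma claim_span (Y : set (X -> R)) : dual_subspace Y ->
  (forall x, (forall f, Y f -> f x = 0) -> x = 0) ->
  forall s : seq X, forall a,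
  (forall y, Y y -> (forall x, x \in s -> y x = 0) -> y a = 0) ->
  forall g, is_linear_fun g -> (forall x, x \in s -> g x = 0) -> g a = 0.
Proof.
move=> [YD [Y0 [YA YS]]] Hsep; elim=> [|b s IH] a H g Hg Hgs.
  have -> : a = 0 by apply: Hsep => f Yf; apply: H.
  exact: lin0.
have [HA|HB] := pselect (forall y, Y y -> (forall x, x \in s -> y x = 0) -> y b = 0).
  apply: (IH a) => // [y Yy ys|x xs]; last by apply: Hgs; rewrite in_cons xs orbT.
  apply: H => // x; rewrite in_cons => /orP [/eqP ->|]; [exact: HA | exact: ys].
have [y0 [Yy0 y0s y0b]] : exists y0, [/\ Y y0, (forall x, x \in s -> y0 x = 0) & y0 b != 0].
  apply: contrapT => Hn; apply: HB => y Yy ys; apply/eqP; apply: contrapT => /negP yb.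
  by apply: Hn; exists y.
set y1 := fun x => (y0 b)^-1 * y0 x.
have Yy1 : Y y1 by exact: YS.
have y1b : y1 b = 1 by rewrite /y1 mulVf.
have y1s : forall x, x \in s -> y1 x = 0.
  by move=> x xs; rewrite /y1 /= (y0s x xs) mulr0.
set a' := a - y1 a *: b.
have Ha' : g a' = 0.
  apply: (IH a') => // [y Yy ys|x xs]; last by apply: Hgs; rewrite in_cons xs orbT.
  have Yy' : Y (fun x => y x + (- y b) * y1 x) by apply: YA => //; exact: YS.
  have := H _ Yy'.
  have Ly := (YD _ Yy).1.
  rewrite /a' (linB _ _ Ly) Ly.2.
  move=> HH; have : y a + - y b * y1 a = 0.
    apply: HH => x; rewrite in_cons => /orP [/eqP ->|xs].
      by rewrite y1b; lra.
    by rewrite ys // y1s // mulr0 addr0.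
  lra.
have : g a = g a' + y1 a * g b.
  by rewrite /a' (linB _ _ Hg) Hg.2; lra.
have gb : g b = 0 by apply: Hgs; rewrite in_cons eqxx.
rewrite Ha' gb; lra.
Qed.

Lemma interp (Y : set (X -> R)) : dual_subspace Y ->
  (forall x, (forall f, Y f -> f x = 0) -> x = 0) ->
  forall s : seq X, forall g, is_linear_fun g ->
  exists y, Y y /\ forall x, x \in s -> y x = g x.
Proof.
move=> HY Hsep; have [YD [Y0 [YA YS]]] := HY.
elim=> [|a s IH] g Hg; first by exists (fun _ => 0); split.
have [y1 [Yy1 y1s]] := IH g Hg.
have Ly1 := (YD _ Yy1).1.
have [HB|HA] := pselect (exists y0, [/\ Y y0, (forall x, x \in s -> y0 x = 0) & y0 a != 0]).
  have [y0 [Yy0 y0s y0a]] := HB.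
  exists (fun x => y1 x + ((g a - y1 a) / y0 a) * y0 x); split.
    by apply: YA => //; exact: YS.
  move=> x; rewrite in_cons => /orP [/eqP ->|xs].
    by rewrite divfK //; lra.
  by rewrite (y0s x xs) mulr0 addr0 (y1s x xs).
have : (fun x => g x - y1 x) a = 0.
  have Hc := claim_span HY Hsep (s := s) (a := a).
  have H1 : forall y, Y y -> (forall x, x \in s -> y x = 0) -> y a = 0.
    move=> y Yy ys; apply/eqP; apply: contrapT => /negP ya.
    by apply: HA; exists y.
  apply: (Hc H1 (fun x => g x - y1 x)); first exact: lin_sub.
  by move=> x xs /=; rewrite (y1s x xs) subrr.
move=> /= h; exists y1; split => // x; rewrite in_cons => /orP [/eqP ->|xs]; first lra.
exact: y1s.
Qed.

End Basics.

Lemma inv_small (R : realType) (e : R) : 0 < e -> exists N, forall n, (N <= n)%N -> n.+1%:R^-1 < e.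
Proof.
move=> e0; have := near_infty_natSinv_lt (PosNum e0); rewrite near_oo_ex.
by [].
Qed.


Lemma seq_lim_uniq (R : realType) (u : nat -> R) a b :
  u n @[n --> \oo] --> (a : R) -> u n @[n --> \oo] --> (b : R) -> a = b.
Proof.
move=> /seq_cvgP Ha /seq_cvgP Hb; apply/eqP; apply: contrapT => /negP ab.
have e0 : 0 < `|a - b| / 2 by rewrite divr_gt0 // normr_gt0 subr_eq0.
have [N1 H1] := Ha _ e0; have [N2 H2] := Hb _ e0.
have := H1 (maxn N1 N2) (leq_maxl _ _); have := H2 (maxn N1 N2) (leq_maxr _ _).
set c := u (maxn N1 N2) => h2 h1.
have := ler_normD (a - c) (c - b); rewrite (_ : a - c + (c - b) = a - b); last by ring.
rewrite (distrC c b); lra.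
Qed.

Lemma cst_cvg_eq (R : realType) (c d : R) : (fun _ : nat => c) @ \oo --> (d : R) -> c = d.
Proof. move=> H; apply: seq_lim_uniq H; exact: cvg_cst. Qed.

Lemma cauchy_limit (R : realType) (X : completeNormedModType R) (w : nat -> X) C :
  (forall n m, `|w n - w m| <= (n.+1%:R^-1 + m.+1%:R^-1) * C) ->
  exists l : X, w n @[n --> \oo] --> l.
Proof.
move=> H; exists (lim (w @ \oo)).
apply/cauchy_cvgP; apply: cauchy_exP => e e0.
have C1 : 0 < `|C| + 1 by rewrite ltr_pwDr // normr_ge0.
have [N HN] := inv_small (divr_gt0 e0 (mulr_gt0 (ltr0Sn R 1) C1)).
exists (w N); apply/(near_oo_ex (fun n => ball (w N) e (w n))); exists N => n Nn /=; rewrite -ball_normE /=.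
apply: le_lt_trans (H N n) _.
have i1 := HN N (leqnn _); have i2 := HN n Nn.
have p1 : 0 < N.+1%:R^-1 :> R by rewrite invr_gt0.
have p2 : 0 < n.+1%:R^-1 :> R by rewrite invr_gt0.
have hC := ler_norm C; have hC0 := normr_ge0 C.
set a := N.+1%:R^-1 in i1 p1 *; set b := n.+1%:R^-1 in i2 p2 *.
have ee : e / (2 * (`|C| + 1)) * (2 * (`|C| + 1)) = e by rewrite divfK // gt_eqF // mulr_gt0.
set q := e / (2 * (`|C| + 1)) in i1 i2 ee.
nra.
Qed.

Lemma cvg_bound (R : realType) (a : nat -> R) l K :
  (forall n, `|l - a n| <= K * n.+1%:R^-1) -> a n @[n --> \oo] --> l.
Proof.
move=> H; apply/seq_cvgP => e e0.
have K1 : 0 < `|K| + 1 by rewrite ltr_pwDr // normr_ge0.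
have [N HN] := inv_small (divr_gt0 e0 K1).
exists N => n Nn; apply: le_lt_trans (H n) _.
have i := HN n Nn; have p : 0 < n.+1%:R^-1 :> R by rewrite invr_gt0.
have hK := ler_norm K; have hK0 := normr_ge0 K.
have ee : e / (`|K| + 1) * (`|K| + 1) = e by rewrite divfK // gt_eqF.
move: i p ee; set b := n.+1%:R^-1; set q := e / (`|K| + 1) => i p ee.
nra.
Qed.

Lemma inv_ineq (R : realType) (t m d : R) : 0 < t -> 0 < m -> m * d <= t -> t^-1 * d <= m^-1.
Proof.
move=> t0 m0 h; rewrite -subr_ge0.
have -> : m^-1 - t^-1 * d = (t - m * d) / (m * t) by field; rewrite ?gt_eqF.
by rewrite divr_ge0 ?subr_ge0 // ltW // mulr_gt0.
Qed.

Section Reverse.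
Variables (R : realType) (X : normedModType R).

Lemma lo_F0 (Y : set (X -> R)) F : dual_subspace Y -> linear_on Y F -> F (fun _ => 0) = 0.
Proof.
move=> [_ [Y0 _]] [_ FS]; have := FS 0 _ Y0.
move=> h; transitivity ((0:R) * F (fun _ => 0)); last by rewrite mul0r.
rewrite -h; congr F; apply: funext => x; by rewrite mul0r.
Qed.

Lemma lo_comb (Y : set (X -> R)) F f g a : dual_subspace Y -> linear_on Y F -> Y f -> Y g ->
  F (fun x => f x + a * g x) = F f + a * F g.
Proof.
move=> [_ [_ [YA YS]]] [FA FS] Yf Yg.
have := FA f (fun x => a * g x) Yf (YS a g Yg); rewrite FS //.
Qed.

Lemma B_bounded (Y : set (X -> R)) F : dual_subspace Y -> linear_on Y F ->
  wstar_seq_continuous Y F -> exists M, 0 < M /\ forall y, Y y -> `|F y| <= M * dual_norm y.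
Proof.
move=> HY HF HC; have [YD [Y0 [YA YS]]] := HY.
apply: contrapT => Hn.
have Hn' : forall n : nat, exists y, Y y /\ n.+1%:R * dual_norm y < `|F y|.
  move=> n; apply: contrapT => Hc; apply: Hn; exists n.+1%:R; split => // y Yy.
  rewrite leNgt; apply/negP => hh; apply: Hc; by exists y.
have [yy Hyy] := choice Hn'.
set u := fun n => fun x => (F (yy n))^-1 * yy n x.
have Fpos : forall n, 0 < `|F (yy n)|.
  move=> n; apply: le_lt_trans (Hyy n).2; rewrite mulr_ge0 //; exact: dn_ge0 (YD _ (Hyy n).1).
have Yu : forall n, Y (u n) by move=> n; apply: YS; exact: (Hyy n).1.
have Fu : forall n, F (u n) = 1.
  move=> n; rewrite /u HF.2; last exact: (Hyy n).1.
  by rewrite mulVf // -normr_gt0.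
have Hw : wstar_cvg u (fun _ => 0).
  move=> x; apply: (@cvg_bound _ _ _ `|x|) => n.
  rewrite sub0r normrN.
  have D := YD _ (Yu n).
  apply: le_trans (dn_bound x D) _.
  have h1 : dual_norm (u n) <= n.+1%:R^-1.
    apply: le_trans (dnZ_le _ (YD _ (Hyy n).1)) _.
    rewrite normrV ?unitfE -?normr_gt0 //.
    apply: inv_ineq => //; last exact: ltW (Hyy n).2.
  rewrite mulrC; apply: ler_wpM2l => //.
have := HC u (fun _ => 0) Yu Y0 Hw.
rewrite (lo_F0 HY HF) (_ : (fun n => F (u n)) = fun _ => 1); last by apply: funext => n; rewrite Fu.
move=> /cst_cvg_eq; lra.
Qed.


Lemma kerZ_sub (Y : set (X -> R)) F : dual_subspace Y -> linear_on Y F ->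
  dual_subspace [set z | Y z /\ F z = 0].
Proof.
move=> HY HF; have [YD [Y0 [YA YS]]] := HY.
split; first by move=> z [Yz _]; exact: YD.
split; first by hnf; split => //; exact: (lo_F0 HY HF).
split.
  move=> f g [Yf Ff] [Yg Fg]; split; first exact: YA.
  by rewrite HF.1 // Ff Fg addr0.
move=> a f [Yf Ff]; split; first exact: YS.
by rewrite HF.2 // Ff mulr0.
Qed.

Lemma approx_ev (Y : set (X -> R)) F cY M y0 :
  dual_subspace Y -> linear_on Y F -> 0 < cY -> (forall x, cY * `|x| <= norming_norm Y x) ->
  0 < M -> (forall y, Y y -> `|F y| <= M * dual_norm y) -> Y y0 -> F y0 = 1 ->
  (forall e, 0 < e -> exists x, norming_norm [set z | Y z /\ F z = 0] x < e * `|x|) ->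
  forall eta, 0 < eta -> exists w, forall h, Y h -> `|h w - F h| <= eta * dual_norm h.
Proof.
move=> HY HF cY0 HcY M0 HM Yy0 Fy0 HZn eta eta0.
have [YD [Y0 [YA YS]]] := HY.
set Z := [set z | Y z /\ F z = 0].
have HZ : dual_subspace Z by exact: kerZ_sub.
have dy0 := dn_ge0 (YD _ Yy0).
set K := 1 + M * dual_norm y0.
have K0 : 0 < K by rewrite /K; have := mulr_ge0 (ltW M0) dy0; lra.
have dec : forall h, Y h -> Z (fun x => h x + (- F h) * y0 x) /\
    dual_norm (fun x => h x + (- F h) * y0 x) <= K * dual_norm h.
  move=> h Yh; split.
    split; first by apply: YA => //; exact: YS.
    by rewrite (lo_comb _ HY HF) // Fy0 mulr1 addrN.
  apply: le_trans (dnD_le (YD _ Yh) (dualZ _ (YD _ Yy0))) _.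
  have := dnZ_le (- F h) (YD _ Yy0); rewrite normrN => h1.
  have h2 := HM _ Yh; have dh := dn_ge0 (YD _ Yh).
  rewrite /K; have := normr_ge0 (F h); nra.
set e := cY * eta / (4 * K * (M + eta)).
have e0 : 0 < e by rewrite /e divr_gt0 ?mulr_gt0 //; lra.
have [x Hx] := HZn e e0.
have nnZ0 : 0 <= norming_norm Z x.
  have := nn_ge x HZ (f := fun _ => 0) (conj Y0 (lo_F0 HY HF)).
  by apply; apply: dn_le => y _; rewrite normr0.
have xpos : 0 < `|x| by have := normr_ge0 x; nra.
set p := e * K.
have p0 : 0 < p by rewrite mulr_gt0.
have pid : p * (4 * (M + eta)) = cY * eta by rewrite /p /e; field; apply/andP; split; rewrite gt_eqF //; lra.
have p4 : 4 * p <= cY by nra.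
have p4M : 4 * p * M <= cY * eta by nra.
have small : forall h, Y h -> `|(fun x => h x + (- F h) * y0 x) x| <= p * `|x| * dual_norm h.
  move=> h Yh; have [Zh dh] := dec h Yh.
  have sb := small_bound HZ (ltW Hx) Zh; apply: le_trans sb _.
  have ex := mulr_gt0 e0 xpos.
  have -> : p * `|x| * dual_norm h = e * `|x| * (K * dual_norm h) by rewrite /p; ring.
  by rewrite ler_wpM2l // ltW.
have [y [Yy dy Hy]] : exists y, [/\ Y y, dual_norm y <= 1 & cY * `|x| / 2 < y x].
  apply: nn_gt => //; have := HcY x; have := mulr_gt0 cY0 xpos; lra.
have key : cY * `|x| < 4 * M * `|y0 x|.
  have hs := small y Yy; simpl in hs.
  have hF : `|F y| <= M.
    apply: le_trans (HM _ Yy) _; have := dn_ge0 (YD _ Yy); nra.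
  have hy : y x = (y x + - F y * y0 x) + F y * y0 x by ring.
  have t1 := ler_norm (y x + - F y * y0 x).
  have t2 : F y * y0 x <= M * `|y0 x|.
    apply: le_trans (ler_norm _) _; rewrite normrM; apply: ler_wpM2r => //.
  have t3 : p * `|x| * dual_norm y <= p * `|x|.
    by rewrite ler_piMr // mulr_ge0 // ltW.
  nra.
have y0x : y0 x != 0.
  apply/negP => /eqP h0; move: key; rewrite h0 normr0 mulr0; have := mulr_gt0 cY0 xpos; lra.
have ay : 0 < `|y0 x| by rewrite normr_gt0.
have pe : p * `|x| <= eta * `|y0 x|.
  have : 4 * M * (p * `|x|) <= 4 * M * (eta * `|y0 x|).
    have := mulr_ge0 (ltW xpos) (ltW p0); nra.
  by rewrite ler_pM2l // mulr_gt0 //; lra.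
exists ((y0 x)^-1 *: x) => h Yh.
have Lh := (YD _ Yh).1.
rewrite Lh.2.
have -> : (y0 x)^-1 * h x - F h = (y0 x)^-1 * (h x + - F h * y0 x) by field.
rewrite normrM normrV ?unitfE // ler_pdivrMl //.
apply: le_trans (small h Yh) _; have := dn_ge0 (YD _ Yh); nra.
Qed.

End Reverse.

Lemma sub_fun (R : realType) (X : normedModType R) (f g : X -> R) :
  (fun x => f x - g x) = (fun x => f x + (-1) * g x).
Proof. by apply: funext => x; ring. Qed.

Lemma reverse_dir (R : realType) (X : completeNormedModType R) :
  (forall Y : set (X -> R), dual_subspace Y -> norming Y -> norm_closed Y ->
     S1 Y = @dual R X) -> fully_Mazur X.
Proof.
move=> H Y HY HN HYc F HF HC.
have [YD [Y0 [YA YS]]] := HY.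
suff [w Hw] : exists w, forall h, Y h -> F h = h w.
  move=> g Yg e e0; exists [:: w], e; split => // h Yh Hs.
  rewrite !Hw //; apply: Hs; by rewrite mem_seq1.
have [M [M0 HM]] := B_bounded HY HF HC.
have [H0|Hn0] := pselect (forall h, Y h -> F h = 0).
  exists 0 => h Yh; rewrite H0 // lin0 //; exact: (YD _ Yh).1.
have [y1 [Yy1 Fy1]] : exists y1, Y y1 /\ F y1 != 0.
  apply: contrapT => Hc; apply: Hn0 => h Yh; apply/eqP; apply: contrapT => /negP hh.
  by apply: Hc; exists h.
set y0 := fun x => (F y1)^-1 * y1 x.
have Yy0 : Y y0 by exact: YS.
have Fy0 : F y0 = 1 by rewrite /y0 HF.2 // mulVf.
have [cY [CY [cY0 [_ HcY]]]] := HN.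
set Z := [set z | Y z /\ F z = 0].
have HZ : dual_subspace Z by exact: kerZ_sub.
have HZn : ~ norming Z.
  move=> HZN.
  have HZc : norm_closed Z.
    move=> f Df Happ.
    have Yf : Y f.
      apply: HYc => // e1 e1p; have [g [[Yg _] hg]] := Happ e1 e1p; by exists g.
    split => //; apply/eqP; apply: contrapT => /negP Ff.
    have ep : 0 < `|F f| / (2 * M) by rewrite divr_gt0 ?mulr_gt0 // normr_gt0.
    have [g [[Yg Fg] hg]] := Happ _ ep.
    have Ysub : Y (fun x => f x - g x) by rewrite sub_fun; apply: YA => //; exact: YS.
    have := HM _ Ysub; rewrite sub_fun (lo_comb _ HY HF) // Fg mulr0 addr0 -sub_fun => h1.
    have : M * dual_norm (fun x => f x - g x) < M * (`|F f| / (2 * M)) by rewrite ltr_pM2l.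
    have -> : M * (`|F f| / (2 * M)) = `|F f| / 2 by field; rewrite gt_eqF.
    have := normr_gt0 (F f); rewrite Ff => /= hp; lra.
  have HS := H Z HZ HZN HZc.
  have : S1 Z y0 by rewrite HS; exact: YD.
  move=> [_ [u [Zu Hu]]].
  have := HC u y0 (fun n => (Zu n).1) Yy0 Hu.
  rewrite (_ : (fun n => F (u n)) = fun _ => 0) ?Fy0; last by apply: funext => n; exact: (Zu n).2.
  move/cst_cvg_eq; lra.
have HZn' := not_norming_small HZ HZn.
have Happ : forall n : nat, exists w, forall h, Y h -> `|h w - F h| <= n.+1%:R^-1 * dual_norm h.
  move=> n; apply: (approx_ev HY HF cY0 (fun x => (HcY x).1) M0 HM Yy0 Fy0 HZn').
  by rewrite invr_gt0.
have [ww Hww] := choice Happ.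
have Hcau : forall n m, `|ww n - ww m| <= (n.+1%:R^-1 + m.+1%:R^-1) * cY^-1.
  move=> n m; rewrite ler_pdivlMr //.
  rewrite mulrC; apply: le_trans (HcY _).1 _; apply: nn_of_bound => //.
  move=> f Yf; have Lf := (YD _ Yf).1; rewrite (linB _ _ Lf).
  have := Hww n f Yf; have := Hww m f Yf => h2 h1.
  have := ler_normD (f (ww n) - F f) (F f - f (ww m)).
  rewrite (_ : f (ww n) - F f + (F f - f (ww m)) = f (ww n) - f (ww m)); last by ring.
  rewrite (distrC (F f)) mulrDl; move=> t; apply: le_trans t _; exact: lerD.
have [l Hl] := cauchy_limit Hcau.
exists l => h Yh.
have Dh := YD _ Yh.
apply: (@seq_lim_uniq _ (fun n => h (ww n))).
  apply: (@cvg_bound _ _ _ (dual_norm h)) => n.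
  by rewrite distrC mulrC; exact: Hww.
exact: (continuous_cvg _ (Dh.2 l) Hl).
Qed.

Section Forward.
Variables (R : realType) (X : normedModType R) (Y : set (X -> R)) (f : X -> R) (e : R).
Hypotheses (HY : dual_subspace Y) (Df : dual f) (e0 : 0 < e)
  (He : forall y, Y y -> e <= dual_norm (fun x => f x - y x)).

Lemma coef_bound y t : Y y -> `|t| * e <= dual_norm (fun x => y x + t * f x).
Proof.
have [YD [Y0 [YA YS]]] := HY.
move=> Yy; have [->|t0] := eqVneq t 0.
  rewrite normr0 mul0r; apply: dn_ge0; exact: dualD (YD _ Yy) (dualZ _ Df).
have Yy' : Y (fun x => (- t^-1) * y x) by exact: YS.
have := He Yy'.
have -> : (fun x => f x - (- t^-1) * y x) = (fun x => t^-1 * (y x + t * f x)).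
  by apply: funext => x; field.
move=> h0; have h := le_trans h0 (dnZ_le _ (dualD (YD _ Yy) (dualZ _ Df))).
have tp : 0 < `|t| by rewrite normr_gt0.
rewrite normrV ?unitfE // in h.
by move: h; rewrite ler_pdivlMl.
Qed.


Definition Yp := [set h | exists y t, Y y /\ h = (fun x => y x + t * f x)].
Definition Fp (h : X -> R) : R := xget 0 [set t | exists y, Y y /\ h = (fun x => y x + t * f x)].

Lemma coef_uniq y1 y2 t1 t2 : Y y1 -> Y y2 ->
  (fun x => y1 x + t1 * f x) = (fun x => y2 x + t2 * f x) -> t1 = t2.
Proof.
have [YD [Y0 [YA YS]]] := HY.
move=> Y1 Y2 E.
have Yd : Y (fun x => y1 x + (-1) * y2 x) by apply: YA => //; exact: YS.
have := coef_bound (t1 - t2) Yd.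
have -> : (fun x => (y1 x + (-1) * y2 x) + (t1 - t2) * f x) = (fun _ => 0).
  apply: funext => x; have := congr1 (fun g => g x) E => /= Ex; lra.
rewrite dn0 => h; have := normr_ge0 (t1 - t2) => h2.
have := e0 => e0'; have : `|t1 - t2| = 0 by nra.
by move/normr0_eq0/eqP; rewrite subr_eq0 => /eqP.
Qed.

Lemma Fp_spec y t : Y y -> Fp (fun x => y x + t * f x) = t.
Proof.
move=> Yy; rewrite /Fp.
have [y' [Yy' E]] := xgetPex 0 (ex_intro (fun t' => exists y0, Y y0 /\ (fun x => y x + t * f x) = (fun x => y0 x + t' * f x)) t (ex_intro _ y (conj Yy erefl))).
by apply: esym; apply: coef_uniq E.
Qed.


Lemma Yp_sub : dual_subspace Yp.
Proof.
have [YD [Y0 [YA YS]]] := HY.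
split; first by move=> _ [y [t [Yy ->]]]; exact: dualD (YD _ Yy) (dualZ _ Df).
split.
  exists (fun _ => 0), 0; split => //; apply: funext => x; by rewrite mul0r addr0.
split.
  move=> _ _ [y1 [t1 [Y1 ->]]] [y2 [t2 [Y2 ->]]].
  exists (fun x => y1 x + y2 x), (t1 + t2); split; first exact: YA.
  apply: funext => x; ring.
move=> a _ [y [t [Yy ->]]]; exists (fun x => a * y x), (a * t); split; first exact: YS.
apply: funext => x; ring.
Qed.

Lemma Y_Yp : Y `<=` Yp.
Proof. move=> y Yy; exists y, 0; split => //; apply: funext => x; by rewrite mul0r addr0. Qed.

Lemma Yp_norming : norming Y -> norming Yp.
Proof.
move=> [c [C [c0 [C0 H]]]]; exists c, 1; split => //; split => // x; split.
  apply: le_trans (H x).1 _; apply: nn_mono => //; [exact: Yp_sub | exact: Y_Yp].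
rewrite mul1r; apply: nn_le; exact: Yp_sub.
Qed.

Lemma Fp_lin : linear_on Yp Fp.
Proof.
have [YD [Y0 [YA YS]]] := HY.
split.
  move=> _ _ [y1 [t1 [Y1 ->]]] [y2 [t2 [Y2 ->]]].
  rewrite !Fp_spec //.
  rewrite (_ : (fun x => y1 x + t1 * f x + (y2 x + t2 * f x)) = (fun x => (y1 x + y2 x) + (t1 + t2) * f x)).
    by rewrite Fp_spec //; exact: YA.
  apply: funext => x; ring.
move=> a _ [y [t [Yy ->]]]; rewrite Fp_spec //.
rewrite (_ : (fun x => a * (y x + t * f x)) = (fun x => (a * y x) + (a * t) * f x)).
  by rewrite Fp_spec //; exact: YS.
apply: funext => x; ring.
Qed.


Lemma Fp_seq : ~ (exists u : nat -> X -> R, (forall n, Y (u n)) /\ wstar_cvg u f) ->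
  wstar_seq_continuous Yp Fp.
Proof.
have [YD [Y0 [YA YS]]] := HY.
move=> Hno u g Yu Yg Hu.
have [y [t [Yy Eg]]] := Yg.
have : forall n, exists p : (X -> R) * R, Y p.1 /\ u n = (fun x => p.1 x + p.2 * f x).
  move=> n; have [yn [tn [Yn En]]] := Yu n; by exists (yn, tn).
move=> /choice [pp Hpp].
have Fu : (fun n => Fp (u n)) = (fun n => (pp n).2).
  apply: funext => n; rewrite (Hpp n).2 Fp_spec //; exact: (Hpp n).1.
rewrite Fu Eg Fp_spec //.
apply/seq_cvgP; apply: contrapT => Hn.
have [d [d0 Hd]] : exists d, 0 < d /\ forall N, exists n, (N <= n)%N /\ d <= `|t - (pp n).2|.
  apply: contrapT => H1; apply: Hn => ep ep0; apply: contrapT => H2; apply: H1.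
  exists ep; split => // N; apply: contrapT => H3; apply: H2; exists N => n Nn.
  rewrite ltNge; apply/negP => H4; apply: H3; exists n; by split.
have [mm Hmm] := choice Hd.
set v := fun N => fun x => (- ((pp (mm N)).2 - t)^-1) * ((pp (mm N)).1 x + (-1) * y x).
apply: Hno; exists v; split.
  move=> N; apply: (YS); apply: (YA); first exact: (Hpp _).1.
  exact: YS.
move=> x; apply/seq_cvgP => ep ep0.
have := Hu x; move/seq_cvgP => /(_ (ep * d)) [|N0 HN0]; first by rewrite mulr_gt0.
exists N0 => N N0N.
have [mN dN] := Hmm N.
have hu := HN0 (mm N) (leq_trans N0N mN).
rewrite Eg (Hpp (mm N)).2 /= in hu.
move: hu dN; rewrite /v.
set T := (pp (mm N)).2; set Y1 := (pp (mm N)).1 x => hu dN.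
have Tn : T - t != 0 by rewrite -normr_gt0 distrC; lra.
have -> : f x - - (T - t)^-1 * (Y1 + -1 * y x) = (T - t)^-1 * ((Y1 + T * f x) - (y x + t * f x)).
  by field.
rewrite normrM normrV ?unitfE // ltr_pdivrMl ?normr_gt0 //.
rewrite distrC; apply: lt_le_trans hu _.
rewrite distrC in dN; rewrite mulrC; apply: ler_wpM2r => //; exact: ltW.
Qed.


Lemma Yp_closed : norm_closed Y -> norm_closed Yp.
Proof.
have [YD [Y0 [YA YS]]] := HY.
move=> HYc g Dg Happ.
have : forall n : nat, exists p : (X -> R) * R, Y p.1 /\
    dual_norm (fun x => g x - (p.1 x + p.2 * f x)) < n.+1%:R^-1.
  move=> n; have [_ [[y [t [Yy ->]]] hn]] := Happ n.+1%:R^-1 ltac:(by rewrite invr_gt0).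
  by exists (y, t).
move=> /choice [pp Hpp].
set a := fun n : nat => n.+1%:R^-1 : R.
have a0 : forall n, 0 < a n by move=> n; rewrite /a invr_gt0.
have Dh : forall n, dual (fun x => (pp n).1 x + (pp n).2 * f x).
  move=> n; exact: dualD (YD _ (Hpp n).1) (dualZ _ Df).
have Dd : forall n, dual (fun x => g x - ((pp n).1 x + (pp n).2 * f x)).
  move=> n; rewrite sub_fun; exact: dualD Dg (dualZ _ (Dh n)).
have tb : forall n m, `|(pp n).2 - (pp m).2| <= (a n + a m) / e.
  move=> n m; rewrite ler_pdivlMr //.
  have Yd : Y (fun x => (pp n).1 x + (-1) * (pp m).1 x).
    apply: (YA); [exact: (Hpp n).1 | apply: (YS); exact: (Hpp m).1].
  apply: le_trans (coef_bound ((pp n).2 - (pp m).2) Yd) _.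
  rewrite (_ : (fun x => (pp n).1 x + (-1) * (pp m).1 x + ((pp n).2 - (pp m).2) * f x) =
     (fun x => (g x - ((pp m).1 x + (pp m).2 * f x)) + (-1) * (g x - ((pp n).1 x + (pp n).2 * f x)))); last first.
    apply: funext => x; ring.
  apply: le_trans (dnD_le (Dd m) (dualZ _ (Dd n))) _.
  have := dnZ_le (-1) (Dd n); rewrite normrN normr1 mul1r => h1.
  have := (Hpp n).2; have := (Hpp m).2; rewrite -/(a n) -/(a m) => h2 h3.
  lra.
set S := range (fun n => (pp n).2 - a n / e).
have S0 : S !=set0 by exists ((pp 0).2 - a 0 / e); exists 0.
have Sub : ubound S ((pp 0).2 + a 0 / e).
  move=> _ [n _ <-]; have := tb n 0; rewrite ler_norml => /andP [_ h].
  rewrite mulrDl in h; lra.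
have Ssup : has_sup S by split => //; exists ((pp 0).2 + a 0 / e).
set ts := sup S.
have tsb : forall m, `|ts - (pp m).2| <= a m / e.
  move=> m; rewrite ler_norml; apply/andP; split.
    have : (pp m).2 - a m / e <= ts by apply: sup_upper_bound => //; exists m.
    lra.
  have : ts <= (pp m).2 + a m / e.
    apply: ge_sup => // _ [n _ <-]; have := tb n m; rewrite ler_norml => /andP [_ h].
    rewrite mulrDl in h; lra.
  lra.
set G := fun x => g x + (- ts) * f x.
have YG : Y G.
  apply: HYc; first exact: dualD Dg (dualZ _ Df).
  move=> ep ep0.
  have dfe := dn_ge0 Df.
  have q0 : 0 < 1 + dual_norm f / e by rewrite ltr_pwDl // divr_ge0 // ltW.
  have [m Hm] := inv_small (divr_gt0 ep0 q0).
  exists (pp m).1; split; first exact: (Hpp m).1.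
  rewrite (_ : (fun x => G x - (pp m).1 x) = (fun x => (g x - ((pp m).1 x + (pp m).2 * f x)) + ((pp m).2 - ts) * f x)); last first.
    apply: funext => x; rewrite /G; ring.
  apply: le_lt_trans (dnD_le (Dd m) (dualZ _ Df)) _.
  have := dnZ_le ((pp m).2 - ts) Df; rewrite distrC => h1.
  have h2 := (Hpp m).2; rewrite -/(a m) in h2.
  have h3 := tsb m; have h4 := Hm m (leqnn _); rewrite -/(a m) in h4.
  have h5 : a m < ep / (1 + dual_norm f / e) := h4.
  rewrite ltr_pdivlMr // in h5.
  have h6 : `|ts - (pp m).2| * dual_norm f <= a m / e * dual_norm f by rewrite ler_wpM2r.
  have h7 : a m / e * dual_norm f = a m * (dual_norm f / e) by rewrite mulrAC mulrA.
  nra.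
exists G, ts; split => //; apply: funext => x; rewrite /G; ring.
Qed.

End Forward.

Lemma forward_dir (R : realType) (X : normedModType R) : fully_Mazur X ->
  forall Y : set (X -> R), dual_subspace Y -> norming Y -> norm_closed Y -> S1 Y = @dual R X.
Proof.
move=> HFM Y HY HN HYc.
have [YD [Y0 [YA YS]]] := HY.
apply/seteqP; split; first by move=> f [].
move=> f Df; split => //.
apply: contrapT => Hno.
have fY : ~ Y f.
  move=> Yf; apply: Hno; exists (fun _ => f); split => // x; exact: cvg_cst.
have [e [e0 He]] : exists e, 0 < e /\ forall y, Y y -> e <= dual_norm (fun x => f x - y x).
  apply: contrapT => Hd; apply: fY; apply: HYc => // ep ep0; apply: contrapT => Hne.
  apply: Hd; exists ep; split => // y Yy; rewrite leNgt; apply/negP => hh; apply: Hne; by exists y.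
have HYq := Yp_sub HY Df.
have HC := HFM (Yp Y f) HYq (Yp_norming HY Df HN) (Yp_closed HY Df e0 He HYc) (Fp Y f)
  (Fp_lin HY Df e0 He) (Fp_seq HY Df e0 He Hno).
have Yq0 := HYq.2.1.
have [s [d [d0 Hs]]] := HC _ Yq0 1 ltr01.
have Hsep : forall x, (forall g, Y g -> g x = 0) -> x = 0 by move=> x; exact: norming_sep HY HN.
have [y [Yy Hys]] := interp HY Hsep s Df.1.
have Yy2 : Y (fun x => (-2) * y x) by exact: YS.
have Yh : Yp Y f (fun x => (-2) * y x + 2 * f x) by exists (fun x => (-2) * y x), 2.
have F2 := Fp_spec HY Df e0 He 2 Yy2.
have F0 := Fp_spec HY Df e0 He 0 Y0.
have E0 : (fun x : X => (fun _ : X => 0) x + 0 * f x) = (fun _ => 0).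
  by apply: funext => x; rewrite mul0r addr0.
rewrite E0 in F0.
have := Hs _ Yh.
rewrite F2 F0 subr0 => H; have : `|2 : R| < 1.
  apply: H => x xs; rewrite (Hys x xs) /=; rewrite (_ : -2 * f x + 2 * f x - 0 = 0); last by ring.
  by rewrite normr0.
rewrite ger0_norm //; lra.
Qed.

Unset Implicit Arguments.

Theorem theorem3p3 (R : realType) (X : completeNormedModType R) :
  fully_Mazur X <->
  (forall Y : set (X -> R), dual_subspace Y -> norming Y -> norm_closed Y ->
     S1 Y = @dual R X).
Proof.
split; [exact: forward_dir | exact: reverse_dir].
Qed.
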